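(* Let $\sigma>0$, $\rho_0\in(0,1)$ and $\rho_1>0$ with $\rho_0\rho_1<1$. Consider random Motzkin paths $(\gamma^{(L)}_0,\dots,\gamma^{(L)}_L)$ sampled from $\Pr_L$ with boundary weights $\alpha_n=\rho_0^n$, $\beta_n=\rho_1^n$ ($n\ge0$), and set $\gamma^{(L)}_k=0$ for $k>L$. Let $\hat\rho=\max\{1,\rho_1\}$. Then, as $L\to\infty$, $\{\gamma^{(L)}_k\}_{k\ge0}\Rightarrow\{Z_k\}_{k\ge0}$ in the sense of finite-dimensional distributions, where $\{Z_k\}$ is a Markov chain with transition probabilities $\mathsf Q^{(\hat\rho)}_{n,m}$ and $Z_0=G+\widetilde G$, with $G,\widetilde G$ independent, $\Pr(G=n)=(1-\rho_0\hat\rho)(\rho_0\hat\rho)^n$ and $\Pr(\widetilde G=n)=(1-\rho_0/\hat\rho)(\rho_0/\hat\rho)^n$, $n\ge0$.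
   Context: A Motzkin path of length $L\ge1$ is a sequence $(\gamma_0,\dots,\gamma_L)$ of non-negative integers with $|\gamma_k-\gamma_{k-1}|\le1$; $\mathcal M^{(L)}$ is the set of all such paths. Weight: $w(\vec\gamma)=\sigma^{\#\{k:\gamma_k=\gamma_{k-1}\}}$. Probability: $\Pr_L(\vec\gamma)=\alpha_{\gamma_0}\beta_{\gamma_L}w(\vec\gamma)/\sum_{\vec\eta\in\mathcal M^{(L)}}\alpha_{\eta_0}\beta_{\eta_L}w(\vec\eta)$. Transition kernels: for $\rho>1$, $$\mathsf Q^{(\rho)}_{n,m}=\frac{1}{\rho+1/\rho+\sigma}\begin{cases}\frac{\rho^{n+2}-\rho^{-(n+2)}}{\rho^{n+1}-\rho^{-(n+1)}}, & m=n+1,\\ \sigma, & m=n,\\ \frac{\rho^{n}-\rho^{-n}}{\rho^{n+1}-\rho^{-(n+1)}}, & m=n-1,\\ 0,&\text{otherwise},\end{cases}$$ and $\mathsf Q^{(1)}_{n,m}$ equals $\frac{1}{2+\sigma}\frac{n+2}{n+1}$ if $m=n+1$, $\frac{\sigma}{2+\sigma}$ if $m=n$, $\frac{1}{2+\sigma}\frac{n}{n+1}$ if $m=n-1\ge0$, and $0$ otherwise. *)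

(* Defs.v *)
From Stdlib Require Import Reals List ZArith Arith Lra.
From Coquelicot Require Import Coquelicot.
Import ListNotations.
Open Scope R_scope.

(* A Motzkin path of length L is encoded by its start height h : nat and its
   list of L steps, each in {-1,0,1}; the path must stay non-negative.
   This is a bijection with M^(L). *)
Definition steps : list Z := [(-1)%Z; 0%Z; 1%Z].

Fixpoint step_seqs (L : nat) : list (list Z) :=
  match L with
  | O => [nil]
  | S L' => flat_map (fun s => map (fun d => d :: s) steps) (step_seqs L')
  end.

Fixpoint heights (h : Z) (ds : list Z) : list Z :=
  h :: match ds with nil => nil | d :: ds' => heights (h + d)%Z ds' end.

Definition valid (h : nat) (ds : list Z) : bool :=
  forallb (fun x => Z.leb 0 x) (heights (Z.of_nat h) ds).

(* gamma_k, with gamma_k = 0 for k > L *)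
Definition gam (h : nat) (ds : list Z) (k : nat) : nat :=
  Z.to_nat (nth k (heights (Z.of_nat h) ds) 0%Z).

(* alpha_{gamma_0} beta_{gamma_L} w(gamma), with alpha_n = rho0^n,
   beta_n = rho1^n, w = sigma^{# flat steps} *)
Definition pweight (sigma rho0 rho1 : R) (h : nat) (ds : list Z) : R :=
  rho0 ^ h * rho1 ^ (Z.to_nat (last (heights (Z.of_nat h) ds) 0%Z))
  * sigma ^ (count_occ Z.eq_dec ds 0%Z).

Definition Wh (sigma rho0 rho1 : R) (L : nat)
  (P : nat -> list Z -> bool) (h : nat) : R :=
  fold_right Rplus 0
    (map (fun ds => if andb (valid h ds) (P h ds) then pweight sigma rho0 rho1 h ds else 0)
       (step_seqs L)).

Definition fdd_event (K : nat) (n : nat -> nat) : nat -> list Z -> bool :=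
  fun h ds => forallb (fun k => Nat.eqb (gam h ds k) (n k)) (seq 0 (S K)).

(* Pr_L(gamma_0 = n 0, ..., gamma_K = n K) ; the partition function is the
   (convergent) series over the starting height *)
Definition PrL (sigma rho0 rho1 : R) (L K : nat) (n : nat -> nat) : R :=
  Series (Wh sigma rho0 rho1 L (fdd_event K n))
  / Series (Wh sigma rho0 rho1 L (fun _ _ => true)).

Definition Qker (rho sigma : R) (n m : nat) : R :=
  if Rle_dec rho 1 then
    (if Nat.eqb m (S n) then / (2 + sigma) * (INR (n + 2) / INR (n + 1))
     else if Nat.eqb m n then sigma / (2 + sigma)
     else if Nat.eqb (S m) n then / (2 + sigma) * (INR n / INR (n + 1))
     else 0)
  else
    (if Nat.eqb m (S n) then
       / (rho + / rho + sigma) *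
       ((rho ^ (n + 2) - / rho ^ (n + 2)) / (rho ^ (n + 1) - / rho ^ (n + 1)))
     else if Nat.eqb m n then sigma / (rho + / rho + sigma)
     else if Nat.eqb (S m) n then
       / (rho + / rho + sigma) *
       ((rho ^ n - / rho ^ n) / (rho ^ (n + 1) - / rho ^ (n + 1)))
     else 0).

Definition geom (q : R) (n : nat) : R := (1 - q) * q ^ n.

(* law of Z_0 = G + G~ with G, G~ independent: convolution *)
Definition Z0law (rho0 rhohat : R) (n : nat) : R :=
  sum_f_R0 (fun j => geom (rho0 * rhohat) j * geom (rho0 / rhohat) (n - j)) n.

Fixpoint chain_prod (Q : nat -> nat -> R) (n : nat -> nat) (K : nat) : R :=
  match K with
  | O => 1
  | S K' => chain_prod Q n K' * Q (n K') (n (S K'))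
  end.

Definition Zfdd (sigma rho0 rhohat : R) (K : nat) (n : nat -> nat) : R :=
  Z0law rho0 rhohat (n O) * chain_prod (Qker rhohat sigma) n K.

(* Main.v *)
Require Import Defs.
From Stdlib Require Import Reals List ZArith Arith Lra Lia.
From Coquelicot Require Import Coquelicot.
Import ListNotations.
Open Scope bool_scope.
Open Scope R_scope.

Definition SW (L : nat) (g : list Z -> R) : R := fold_right Rplus 0 (map g (step_seqs L)).

Lemma SW_gen (g : list Z -> R) (l : list (list Z)) :
  fold_right Rplus 0 (map g (flat_map (fun s => map (fun d => d :: s) steps) l)) =
  fold_right Rplus 0 (map (fun s => g ((-1)%Z :: s) + g (0%Z :: s) + g (1%Z :: s)) l).
Proof.
  induction l as [|a l IH]; simpl; [reflexivity|].
  simpl in IH. rewrite IH. ring.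
Qed.

Lemma SW_S L g : SW (S L) g = SW L (fun s => g ((-1)%Z :: s) + g (0%Z :: s) + g (1%Z :: s)).
Proof. unfold SW. simpl. apply SW_gen. Qed.

Lemma SW_ext L g1 g2 : (forall s, g1 s = g2 s) -> SW L g1 = SW L g2.
Proof. intros H. unfold SW. induction (step_seqs L); simpl; [reflexivity|]. rewrite H, IHl. reflexivity. Qed.

Lemma SW_plus L g1 g2 : SW L (fun s => g1 s + g2 s) = SW L g1 + SW L g2.
Proof. unfold SW. induction (step_seqs L); simpl; [ring|]. rewrite IHl. ring. Qed.

Lemma SW_scal L c g : SW L (fun s => c * g s) = c * SW L g.
Proof. unfold SW. induction (step_seqs L); simpl; [ring|]. rewrite IHl. ring. Qed.

Lemma SW_zero L g : (forall s, g s = 0) -> SW L g = 0.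
Proof. intros H. unfold SW. induction (step_seqs L); simpl; [ring|]. rewrite IHl, H. ring. Qed.

Definition valid_z (z : Z) (ds : list Z) : bool := forallb (fun x => Z.leb 0 x) (heights z ds).
Definition wt (sigma rho1 : R) (z : Z) (ds : list Z) : R :=
  rho1 ^ (Z.to_nat (last (heights z ds) 0%Z)) * sigma ^ (count_occ Z.eq_dec ds 0%Z).
Definition evz (K : nat) (n : nat -> nat) (z : Z) (ds : list Z) : bool :=
  forallb (fun k => Nat.eqb (Z.to_nat (nth k (heights z ds) 0%Z)) (n k)) (seq 0 (S K)).

Definition Vz sigma rho1 L z := SW L (fun ds => if valid_z z ds then wt sigma rho1 z ds else 0).
Definition NV sigma rho1 L K n z :=
  SW L (fun ds => if valid_z z ds && evz K n z ds then wt sigma rho1 z ds else 0).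

Lemma last_heights z y s : last (z :: heights y s) 0%Z = last (heights y s) 0%Z.
Proof. destruct s; reflexivity. Qed.

Lemma valid_cons z d s : valid_z z (d :: s) = Z.leb 0 z && valid_z (z + d) s.
Proof. reflexivity. Qed.

Lemma wt_cons sigma rho1 z d s :
  wt sigma rho1 z (d :: s) = wt sigma rho1 (z + d) s * (if Z.eq_dec d 0 then sigma else 1).
Proof.
  unfold wt. simpl heights. rewrite last_heights. simpl count_occ.
  destruct (Z.eq_dec d 0); simpl; ring.
Qed.

Lemma Vz_0 sigma rho1 z : Vz sigma rho1 0 z = if Z.leb 0 z then rho1 ^ Z.to_nat z else 0.
Proof. unfold Vz, SW, valid_z, wt. simpl. destruct (Z.leb 0 z); simpl; ring. Qed.

Lemma Vz_S sigma rho1 L z : Vz sigma rho1 (S L) z =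
  if Z.leb 0 z then Vz sigma rho1 L (z - 1) + sigma * Vz sigma rho1 L z + Vz sigma rho1 L (z + 1) else 0.
Proof.
  unfold Vz. rewrite SW_S.
  destruct (Z.leb 0 z) eqn:Hz.
  - rewrite <- SW_scal, <- !SW_plus. apply SW_ext. intros s.
    rewrite !valid_cons, Hz, !wt_cons. simpl andb.
    replace (z + -1)%Z with (z - 1)%Z by lia. replace (z + 0)%Z with z by lia.
    simpl. destruct (valid_z (z-1) s), (valid_z z s), (valid_z (z+1) s); ring.
  - apply SW_zero. intros s. rewrite !valid_cons, Hz. simpl. ring.
Qed.

Lemma seq_shift_forallb (f : nat -> bool) a m :
  forallb f (seq (S a) m) = forallb (fun k => f (S k)) (seq a m).
Proof. revert a. induction m; intros a; simpl; [reflexivity|]. rewrite IHm. reflexivity. Qed.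

Lemma evz_S K n z d s : evz (S K) n z (d :: s) =
  Nat.eqb (Z.to_nat z) (n 0%nat) && evz K (fun k => n (S k)) (z + d) s.
Proof.
  unfold evz. change (seq 0 (S (S K))) with (0%nat :: seq 1 (S K)).
  simpl forallb at 1. rewrite seq_shift_forallb. reflexivity.
Qed.

Lemma evz_0 n z ds : evz 0 n z ds = Nat.eqb (Z.to_nat z) (n 0%nat).
Proof. unfold evz. simpl. destruct ds; simpl; rewrite Bool.andb_true_r; reflexivity. Qed.

Lemma NV_0 sigma rho1 L n z : NV sigma rho1 L 0 n z =
  if Nat.eqb (Z.to_nat z) (n 0%nat) then Vz sigma rho1 L z else 0.
Proof.
  unfold NV, Vz. destruct (Nat.eqb (Z.to_nat z) (n 0%nat)) eqn:E.
  - apply SW_ext. intros s. rewrite evz_0, E, Bool.andb_true_r. reflexivity.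
  - apply SW_zero. intros s. rewrite evz_0, E, Bool.andb_false_r. reflexivity.
Qed.

Lemma NV_S sigma rho1 L K n z : NV sigma rho1 (S L) (S K) n z =
  if Z.leb 0 z && Nat.eqb (Z.to_nat z) (n 0%nat) then
    NV sigma rho1 L K (fun k => n (S k)) (z - 1) + sigma * NV sigma rho1 L K (fun k => n (S k)) z
    + NV sigma rho1 L K (fun k => n (S k)) (z + 1) else 0.
Proof.
  unfold NV. rewrite SW_S.
  destruct (Z.leb 0 z && Nat.eqb (Z.to_nat z) (n 0%nat)) eqn:Hz.
  - rewrite <- SW_scal, <- !SW_plus. apply SW_ext. intros s.
    rewrite !valid_cons, !evz_S, !wt_cons.
    apply andb_prop in Hz. destruct Hz as [H1 H2]. rewrite H1, H2, !Bool.andb_true_l.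
    replace (z + -1)%Z with (z - 1)%Z by lia. replace (z + 0)%Z with z by lia.
    destruct (Z.eq_dec (-1) 0); [lia|]. destruct (Z.eq_dec 0 0); [|lia]. destruct (Z.eq_dec 1 0); [lia|].
    destruct (valid_z (z-1) s && evz K (fun k => n (S k)) (z-1) s),
      (valid_z z s && evz K (fun k => n (S k)) z s),
      (valid_z (z+1) s && evz K (fun k => n (S k)) (z+1) s); ring.
  - apply SW_zero. intros s. rewrite !valid_cons, !evz_S.
    destruct (Z.leb 0 z); simpl in Hz |- *; [|ring].
    destruct (Z.leb 0 z); simpl in Hz |- *; try rewrite Hz; rewrite ?Bool.andb_false_l, ?Bool.andb_false_r; ring.
Qed.

Definition tk (sigma : R) (a b : nat) : R :=
  if Nat.eqb b (S a) then 1 else if Nat.eqb b a then sigma else if Nat.eqb (S b) a then 1 else 0.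

Definition F sigma rho1 M h := Vz sigma rho1 M (Z.of_nat h).

Lemma Vz_neg sigma rho1 L z : (z < 0)%Z -> Vz sigma rho1 L z = 0.
Proof.
  intros Hz. assert (E : Z.leb 0 z = false) by (apply Z.leb_gt; lia).
  destruct L; [rewrite Vz_0 | rewrite Vz_S]; rewrite E; reflexivity.
Qed.

Lemma chain_prod_front Q n K :
  chain_prod Q n (S K) = Q (n 0%nat) (n 1%nat) * chain_prod Q (fun k => n (S k)) K.
Proof.
  induction K; simpl; [ring|]. simpl in IHK. rewrite IHK. ring.
Qed.

Lemma tk_sum sigma a b :
  (if Z.leb 0 (Z.of_nat a - 1) && Nat.eqb (Z.to_nat (Z.of_nat a - 1)) b then 1 else 0)
  + sigma * (if Z.leb 0 (Z.of_nat a) && Nat.eqb (Z.to_nat (Z.of_nat a)) b then 1 else 0)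
  + (if Z.leb 0 (Z.of_nat a + 1) && Nat.eqb (Z.to_nat (Z.of_nat a + 1)) b then 1 else 0)
  = tk sigma a b.
Proof.
  unfold tk.
  repeat match goal with
  | |- context [Nat.eqb ?x ?y] => destruct (Nat.eqb_spec x y)
  | |- context [Z.leb ?x ?y] => destruct (Z.leb_spec x y)
  end; simpl; try lia; ring.
Qed.

Lemma three_factor (c1 c2 c3 : bool) (sigma P : R) :
  (if c1 then P else 0) + sigma * (if c2 then P else 0) + (if c3 then P else 0) =
  ((if c1 then 1 else 0) + sigma * (if c2 then 1 else 0) + (if c3 then 1 else 0)) * P.
Proof. destruct c1, c2, c3; ring. Qed.

Lemma NV_closed sigma rho1 K : forall L n z, (K <= L)%nat ->
  NV sigma rho1 L K n z =
  if Z.leb 0 z && Nat.eqb (Z.to_nat z) (n 0%nat)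
  then chain_prod (tk sigma) n K * F sigma rho1 (L - K) (n K) else 0.
Proof.
  induction K as [|K IHK]; intros L n z HKL.
  - rewrite NV_0. rewrite Nat.sub_0_r. simpl chain_prod.
    destruct (Z.leb_spec 0 z).
    + simpl. destruct (Nat.eqb (Z.to_nat z) (n 0%nat)) eqn:E; [|reflexivity].
      apply Nat.eqb_eq in E. unfold F. rewrite <- E, Z2Nat.id by lia. ring.
    + rewrite Vz_neg by lia. destruct (Nat.eqb (Z.to_nat z) (n 0%nat)); simpl; ring.
  - destruct L as [|L]; [lia|]. rewrite NV_S. rewrite !IHK by lia.
    destruct (Z.leb 0 z && Nat.eqb (Z.to_nat z) (n 0%nat)) eqn:E; [|reflexivity].
    apply andb_prop in E. destruct E as [E1 E2].
    apply Z.leb_le in E1. apply Nat.eqb_eq in E2.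
    replace z with (Z.of_nat (n 0%nat)) by (rewrite <- E2; apply Z2Nat.id; lia).
    rewrite three_factor, tk_sum, chain_prod_front. simpl (S L - S K)%nat. ring.
Qed.

Lemma Wh_eq sigma rho0 rho1 L P h :
  Wh sigma rho0 rho1 L P h = rho0 ^ h *
  SW L (fun ds => if valid_z (Z.of_nat h) ds && P h ds then wt sigma rho1 (Z.of_nat h) ds else 0).
Proof.
  unfold Wh. rewrite <- SW_scal. unfold SW. f_equal. apply map_ext. intros ds.
  unfold valid, pweight, wt, valid_z. destruct (_ && _); ring.
Qed.

Lemma Wh_true sigma rho0 rho1 L h :
  Wh sigma rho0 rho1 L (fun _ _ => true) h = rho0 ^ h * F sigma rho1 L h.
Proof.
  rewrite Wh_eq. unfold F, Vz. f_equal. apply SW_ext. intros s. rewrite Bool.andb_true_r. reflexivity.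
Qed.

Lemma Wh_ev sigma rho0 rho1 L K n h :
  Wh sigma rho0 rho1 L (fdd_event K n) h = rho0 ^ h * NV sigma rho1 L K n (Z.of_nat h).
Proof. rewrite Wh_eq. reflexivity. Qed.

Lemma sum_single (a : nat) (c : R) N :
  sum_f_R0 (fun h => if Nat.eqb h a then c else 0) N = if Nat.leb a N then c else 0.
Proof.
  induction N.
  - simpl. destruct a; simpl; ring.
  - rewrite tech5, IHN. destruct (Nat.leb_spec a N), (Nat.eqb_spec (S N) a), (Nat.leb_spec a (S N)); try lia; ring.
Qed.

Lemma is_series_fin (f : nat -> R) N :
  (forall k, (N < k)%nat -> f k = 0) -> is_series f (sum_f_R0 f N).
Proof.
  intros H. apply is_series_Reals. intros eps Heps. exists N. intros m Hm.
  replace (sum_f_R0 f m) with (sum_f_R0 f N).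
  - unfold R_dist. rewrite Rminus_diag, Rabs_R0. exact Heps.
  - induction Hm; [reflexivity|]. rewrite tech5, <- IHHm, H by lia. ring.
Qed.

Lemma Series_single (a : nat) (c : R) : Series (fun h => if Nat.eqb h a then c else 0) = c.
Proof.
  apply is_series_unique.
  assert (H := is_series_fin (fun h => if Nat.eqb h a then c else 0) a).
  rewrite sum_single, Nat.leb_refl in H. apply H.
  intros k Hk. destruct (Nat.eqb_spec k a); [lia|reflexivity].
Qed.

Lemma numer_eq sigma rho0 rho1 L K n : (K <= L)%nat ->
  Series (Wh sigma rho0 rho1 L (fdd_event K n)) =
  rho0 ^ (n 0%nat) * chain_prod (tk sigma) n K * F sigma rho1 (L - K) (n K).
Proof.
  intros HKL. rewrite <- (Series_single (n 0%nat)). apply Series_ext. intros h.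
  rewrite Wh_ev, NV_closed by exact HKL. rewrite Nat2Z.id.
  replace (Z.leb 0 (Z.of_nat h)) with true by (symmetry; apply Z.leb_le; lia). simpl.
  destruct (Nat.eqb_spec h (n 0%nat)); [subst; ring | ring].
Qed.

Fixpoint Fg (sigma : R) (b : nat -> R) (M h : nat) {struct M} : R :=
  match M with
  | O => b h
  | S M' => match h with
            | O => sigma * Fg sigma b M' 0 + Fg sigma b M' 1
            | S h' => Fg sigma b M' h' + sigma * Fg sigma b M' (S h') + Fg sigma b M' (S (S h'))
            end
  end.

Lemma Fg_unique sigma b (G : nat -> nat -> R) :
  (forall h, G 0%nat h = b h) ->
  (forall M, G (S M) 0%nat = sigma * G M 0%nat + G M 1%nat) ->
  (forall M h, G (S M) (S h) = G M h + sigma * G M (S h) + G M (S (S h))) ->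
  forall M h, G M h = Fg sigma b M h.
Proof.
  intros H0 H1 H2 M. induction M; intros h; simpl.
  - apply H0.
  - destruct h; [rewrite H1 | rewrite H2]; rewrite !IHM; reflexivity.
Qed.

Lemma F_Fg sigma rho1 M h : F sigma rho1 M h = Fg sigma (fun x => rho1 ^ x) M h.
Proof.
  apply Fg_unique.
  - intros x. unfold F. rewrite Vz_0. replace (Z.leb 0 (Z.of_nat x)) with true
      by (symmetry; apply Z.leb_le; lia). rewrite Nat2Z.id. reflexivity.
  - intros M'. unfold F. rewrite Vz_S. simpl Z.leb. cbv iota.
    rewrite (Vz_neg _ _ _ (0 - 1)%Z) by lia. simpl. ring.
  - intros M' x. unfold F. rewrite Vz_S.
    replace (Z.leb 0 (Z.of_nat (S x))) with true by (symmetry; apply Z.leb_le; lia).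
    replace (Z.of_nat (S x) - 1)%Z with (Z.of_nat x) by lia.
    replace (Z.of_nat (S x) + 1)%Z with (Z.of_nat (S (S x))) by lia. reflexivity.
Qed.

Lemma Fg_lin sigma b1 b2 a c M : forall h,
  Fg sigma (fun x => a * b1 x + c * b2 x) M h = a * Fg sigma b1 M h + c * Fg sigma b2 M h.
Proof.
  induction M; intros h; simpl; [reflexivity|].
  destruct h; rewrite !IHM; ring.
Qed.

Lemma Fg_ext sigma b1 b2 M : (forall x, b1 x = b2 x) -> forall h, Fg sigma b1 M h = Fg sigma b2 M h.
Proof.
  intros E. induction M; intros h; simpl; [apply E|]. destruct h; rewrite !IHM; reflexivity.
Qed.

Lemma Fg_local sigma b1 b2 B M : (forall x, (x <= B)%nat -> b1 x = b2 x) ->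
  forall h, (h + M <= B)%nat -> Fg sigma b1 M h = Fg sigma b2 M h.
Proof.
  intros E. induction M; intros h Hh; simpl; [apply E; lia|].
  destruct h; rewrite !IHM by lia; reflexivity.
Qed.

Lemma Fg_nonneg sigma b M : 0 <= sigma -> (forall x, 0 <= b x) -> forall h, 0 <= Fg sigma b M h.
Proof.
  intros Hs Hb. induction M; intros h; simpl; [apply Hb|].
  destruct h.
  - specialize (IHM 0%nat) as A. specialize (IHM 1%nat) as B. nra.
  - specialize (IHM h) as A. specialize (IHM (S h)) as B. specialize (IHM (S (S h))) as C. nra.
Qed.

Lemma Fg_le_geom sigma b x M : 0 <= sigma -> 0 < x -> (forall h, 0 <= b h <= x ^ h) ->
  forall h, Fg sigma b M h <= (x + / x + sigma) ^ M * x ^ h.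
Proof.
  intros Hs Hx Hb. assert (Hn : forall M h, 0 <= Fg sigma b M h)
    by (intros; apply Fg_nonneg; [lra| intros; apply Hb]).
  assert (Hix : 0 < / x) by (apply Rinv_0_lt_compat; lra).
  induction M; intros h; simpl.
  - rewrite Rmult_1_l. apply Hb.
  - assert (Hm : 0 < (x + / x + sigma) ^ M) by (apply pow_lt; lra).
    destruct h.
    + specialize (IHM 0%nat) as A. specialize (IHM 1%nat) as B. simpl in A, B.
      assert (sigma * Fg sigma b M 0 <= sigma * ((x + / x + sigma) ^ M)) by (apply Rmult_le_compat_l; lra).
      nra.
    + specialize (IHM h) as A. specialize (IHM (S h)) as B. specialize (IHM (S (S h))) as C.
      simpl in A, B, C.
      assert (sigma * Fg sigma b M (S h) <= sigma * ((x + / x + sigma) ^ M * (x * x ^ h)))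
        by (apply Rmult_le_compat_l; lra).
      assert (E : (x + / x + sigma) * (x + / x + sigma) ^ M * (x * x ^ h) =
        (x + / x + sigma) ^ M * x ^ h + sigma * ((x + / x + sigma) ^ M * (x * x ^ h))
        + (x + / x + sigma) ^ M * (x * (x * x ^ h))) by (field; lra).
      change (x ^ S h) with (x * x ^ h). lra.
Qed.

Lemma Fg_harm sigma psi mu :
  sigma * psi 0%nat + psi 1%nat = mu * psi 0%nat ->
  (forall h, psi h + sigma * psi (S h) + psi (S (S h)) = mu * psi (S h)) ->
  forall M h, Fg sigma psi M h = mu ^ M * psi h.
Proof.
  intros H0 H1 M h. symmetry. apply (Fg_unique sigma psi (fun M h => mu ^ M * psi h)).
  - intros; simpl; ring.
  - intros M'. transitivity (mu ^ M' * (sigma * psi 0%nat + psi 1%nat)); [rewrite H0; simpl; ring | ring].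
  - intros M' x. transitivity (mu ^ M' * (psi x + sigma * psi (S x) + psi (S (S x))));
      [rewrite H1; simpl; ring | ring].
Qed.

Fixpoint u (sigma : R) (M : nat) (d : Z) {struct M} : R :=
  match M with
  | O => if Z.eqb d 0 then 1 else 0
  | S M' => u sigma M' (d - 1) + sigma * u sigma M' d + u sigma M' (d + 1)
  end.

Lemma u_sym sigma M : forall d, u sigma M (- d) = u sigma M d.
Proof.
  induction M; intros d; simpl.
  - destruct (Z.eqb_spec (-d) 0), (Z.eqb_spec d 0); try lia; reflexivity.
  - replace (- d - 1)%Z with (- (d + 1))%Z by lia. replace (- d + 1)%Z with (- (d - 1))%Z by lia.
    rewrite !IHM. ring.
Qed.

Lemma u_nonneg sigma M : 0 <= sigma -> forall d, 0 <= u sigma M d.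
Proof.
  intros Hs. induction M; intros d; simpl.
  - destruct (Z.eqb d 0); lra.
  - specialize (IHM (d-1)%Z) as A. specialize (IHM d) as B. specialize (IHM (d+1)%Z) as C. nra.
Qed.

Lemma u_pos0 sigma M : 0 < sigma -> 0 < u sigma M 0.
Proof.
  intros Hs. induction M; simpl; [lra|].
  pose proof (u_nonneg sigma M ltac:(lra) (-1)%Z). pose proof (u_nonneg sigma M ltac:(lra) 1%Z).
  nra.
Qed.

Lemma w_refl sigma e M : forall h,
  Fg sigma (fun x => if Nat.eqb x e then 1 else 0) M h =
  u sigma M (Z.of_nat e - Z.of_nat h) - u sigma M (Z.of_nat e + Z.of_nat h + 2).
Proof.
  intros h0. symmetry.
  apply (Fg_unique sigma _ (fun M h => u sigma M (Z.of_nat e - Z.of_nat h) - u sigma M (Z.of_nat e + Z.of_nat h + 2))).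
  - intros h. simpl. destruct (Z.eqb_spec (Z.of_nat e - Z.of_nat h) 0), (Z.eqb_spec (Z.of_nat e + Z.of_nat h + 2) 0),
      (Nat.eqb_spec h e); try lia; ring.
  - intros M'. simpl.
    replace (Z.of_nat e - 0 - 1)%Z with (Z.of_nat e - 1)%Z by lia.
    replace (Z.of_nat e - 0 + 1)%Z with (Z.of_nat e + 1)%Z by lia.
    replace (Z.of_nat e - 0)%Z with (Z.of_nat e) by lia.
    replace (Z.of_nat e + 0 + 2 - 1)%Z with (Z.of_nat e + 1)%Z by lia.
    replace (Z.of_nat e + 0 + 2 + 1)%Z with (Z.of_nat e + 3)%Z by lia.
    replace (Z.of_nat e + 0 + 2)%Z with (Z.of_nat e + 2)%Z by lia.
    replace (Z.of_nat e - 1 + 2)%Z with (Z.of_nat e + 1)%Z by lia.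
    replace (Z.of_nat e + 1 + 2)%Z with (Z.of_nat e + 3)%Z by lia.
    replace (Z.of_nat e - 1)%Z with (Z.of_nat e - 1)%Z by lia. ring.
  - intros M' h. rewrite !Nat2Z.inj_succ. simpl.
    replace (Z.of_nat e - Z.succ (Z.of_nat h) - 1)%Z with (Z.of_nat e - Z.succ (Z.succ (Z.of_nat h)))%Z by lia.
    replace (Z.of_nat e - Z.succ (Z.of_nat h) + 1)%Z with (Z.of_nat e - Z.of_nat h)%Z by lia.
    replace (Z.of_nat e + Z.succ (Z.of_nat h) + 2 - 1)%Z with (Z.of_nat e + Z.of_nat h + 2)%Z by lia.
    replace (Z.of_nat e + Z.succ (Z.of_nat h) + 2 + 1)%Z with (Z.of_nat e + Z.succ (Z.succ (Z.of_nat h)) + 2)%Z by lia.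
    ring.
Qed.

Lemma u_rec3 sigma M : forall k : Z,
  (INR M + IZR k + 2) * u sigma M (k + 2) - (INR M - IZR k) * u sigma M k
  + sigma * (IZR k + 1) * u sigma M (k + 1) = 0.
Proof.
  induction M; intros k.
  - simpl. destruct (Z.eqb_spec (k+2) 0), (Z.eqb_spec k 0), (Z.eqb_spec (k+1) 0); try lia.
    + subst. replace (k) with (-2)%Z by lia. simpl. ring.
    + subst. simpl. ring.
    + replace (k) with (-1)%Z by lia. simpl. ring.
    + ring.
  - pose proof (IHM (k - 1)%Z) as H1. pose proof (IHM k) as H2. pose proof (IHM (k + 1)%Z) as H3.
    rewrite minus_IZR in H1. rewrite plus_IZR in H3.
    replace (k - 1 + 2)%Z with (k + 1)%Z in H1 by lia. replace (k - 1 + 1)%Z with k in H1 by lia.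
    replace (k + 1 + 2)%Z with (k + 3)%Z in H3 by lia. replace (k + 1 + 1)%Z with (k + 2)%Z in H3 by lia.
    simpl u. rewrite S_INR.
    replace (k + 2 - 1)%Z with (k + 1)%Z by lia. replace (k + 2 + 1)%Z with (k + 3)%Z by lia.
    replace (k + 1 - 1)%Z with k by lia. replace (k + 1 + 1)%Z with (k + 2)%Z by lia.
    match type of H1 with ?a1 = _ => match type of H2 with ?a2 = _ => match type of H3 with ?a3 = _ =>
      transitivity (a1 + sigma * a2 + a3); [ring | rewrite H1, H2, H3; ring] end end end.
Qed.

Definition U sigma M (k : nat) := u sigma M (Z.of_nat k).

Lemma u_S sigma M d : u sigma (S M) d = u sigma M (d - 1) + sigma * u sigma M d + u sigma M (d + 1).
Proof. reflexivity. Qed.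

Lemma U_delta sigma M k :
  U sigma M k - U sigma M (k + 2) =
  (INR k + 1) * (2 * U sigma M k + sigma * U sigma M (S k)) / (INR M + INR k + 2).
Proof.
  unfold U. pose proof (u_rec3 sigma M (Z.of_nat k)) as H.
  rewrite <- INR_IZR_INZ in H.
  replace (Z.of_nat (k + 2)) with (Z.of_nat k + 2)%Z by lia.
  replace (Z.of_nat (S k)) with (Z.of_nat k + 1)%Z by lia.
  assert (0 < INR M + INR k + 2) by (pose proof (pos_INR M); pose proof (pos_INR k); lra).
  field_simplify_eq; [|lra]. lra.
Qed.

Lemma U_nonneg sigma M k : 0 <= sigma -> 0 <= U sigma M k.
Proof. intros; apply u_nonneg; auto. Qed.

Lemma U_dec sigma M k : 0 <= sigma -> U sigma M (k + 2) <= U sigma M k.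
Proof.
  intros Hs. pose proof (U_delta sigma M k).
  pose proof (U_nonneg sigma M k Hs). pose proof (U_nonneg sigma M (S k) Hs).
  assert (0 < INR M + INR k + 2) by (pose proof (pos_INR M); pose proof (pos_INR k); lra).
  assert (0 <= (INR k + 1) * (2 * U sigma M k + sigma * U sigma M (S k)) / (INR M + INR k + 2)).
  { apply Rdiv_le_0_compat; [|lra]. apply Rmult_le_pos; [pose proof (pos_INR k); lra| nra]. }
  lra.
Qed.

Lemma U_le01 sigma M k : 0 <= sigma -> U sigma M k <= U sigma M 0 + U sigma M 1.
Proof.
  intros Hs. pose proof (U_nonneg sigma M 0 Hs). pose proof (U_nonneg sigma M 1 Hs).
  induction k as [k IH] using lt_wf_ind.
  destruct k as [|[|k]]; [lra|lra|].
  pose proof (U_dec sigma M k Hs). replace (S (S k)) with (k + 2)%nat by lia.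
  specialize (IH k ltac:(lia)). lra.
Qed.

Lemma U_S0 sigma M : U sigma (S M) 0 = sigma * U sigma M 0 + 2 * U sigma M 1.
Proof.
  unfold U. simpl u. replace (-1)%Z with (- (1))%Z by reflexivity. rewrite u_sym. simpl. ring.
Qed.

Lemma U_S1 sigma M : U sigma (S M) 1 = U sigma M 0 + sigma * U sigma M 1 + U sigma M 2.
Proof. unfold U. simpl. ring. Qed.

Lemma U_SS sigma M j : U sigma (S M) (S j) = U sigma M j + sigma * U sigma M (S j) + U sigma M (S (S j)).
Proof.
  unfold U. rewrite u_S. replace (Z.of_nat (S j) - 1)%Z with (Z.of_nat j) by lia.
  replace (Z.of_nat (S j) + 1)%Z with (Z.of_nat (S (S j))) by lia. reflexivity.
Qed.

Lemma U_2 sigma M : (INR M + 2) * U sigma M 2 = INR M * U sigma M 0 - sigma * U sigma M 1.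
Proof.
  pose proof (u_rec3 sigma M 0). unfold U. simpl Z.of_nat. simpl in H |- *. lra.
Qed.

Lemma U_pos0 sigma M : 0 < sigma -> 0 < U sigma M 0.
Proof. intros; apply u_pos0; auto. Qed.

Lemma U_0 sigma k : U sigma 0 k = if Nat.eqb k 0 then 1 else 0.
Proof. unfold U. simpl. destruct k; reflexivity. Qed.

Lemma lim_scal (u : nat -> R) (a l : R) : is_lim_seq u l -> is_lim_seq (fun n => a * u n) (a * l).
Proof. intros H. apply (is_lim_seq_scal_l _ a l H). Qed.

Lemma lim_scal_r (u : nat -> R) (a l : R) : is_lim_seq u l -> is_lim_seq (fun n => u n * a) (l * a).
Proof. intros H. apply (is_lim_seq_scal_r _ a l H). Qed.

Lemma lim_inv_lin b : is_lim_seq (fun M => / (INR M + b)) 0.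
Proof.
  replace (Finite 0) with (Rbar_inv p_infty) by reflexivity.
  apply is_lim_seq_inv; [|discriminate].
  eapply is_lim_seq_plus; [apply is_lim_seq_INR | apply is_lim_seq_const | reflexivity].
Qed.

Lemma lim_ratio_lin a b : is_lim_seq (fun M => (INR M + a) / (INR M + b)) 1.
Proof.
  apply is_lim_seq_ext_loc with (fun M => 1 + (a - b) * / (INR M + b)).
  - destruct (Rle_dec 0 b) as [Hb|Hb].
    + exists 1%nat. intros M HM. assert (0 < INR M) by (apply lt_0_INR; lia). field. lra.
    + destruct (INR_unbounded (- b)) as [N HN]. exists (S N). intros M HM.
      assert (INR N <= INR M) by (apply le_INR; lia). field. lra.
  - assert (H : is_lim_seq (fun M => 1 + (a - b) * / (INR M + b)) (1 + (a - b) * 0)).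
    { apply is_lim_seq_plus'; [apply is_lim_seq_const|].
      apply (is_lim_seq_scal_l _ (a - b) 0), lim_inv_lin. }
    rewrite Rmult_0_r, Rplus_0_r in H. exact H.
Qed.

Lemma contr (a e : nat -> R) q : 0 <= q < 1 -> (forall n, 0 <= a n) ->
  (forall n, a (S n) <= q * a n + e n) -> is_lim_seq e 0 -> is_lim_seq a 0.
Proof.
  intros Hq Ha Hrec He. apply is_lim_seq_spec in He. apply is_lim_seq_spec. intros eps.
  assert (Hp : 0 < eps * (1 - q) / 2) by (pose proof (cond_pos eps); apply Rdiv_lt_0_compat; nra).
  destruct (He (mkposreal _ Hp)) as [N HN]. simpl in HN.
  assert (Hb : forall k, a (k + N)%nat <= q ^ k * a N + eps / 2).
  { induction k; simpl.
    - pose proof (cond_pos eps). lra.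
    - specialize (HN (k + N)%nat ltac:(lia)). rewrite Rminus_0_r in HN.
      apply Rabs_def2 in HN. specialize (Hrec (k + N)%nat).
      assert (q * a (k + N)%nat <= q * (q ^ k * a N + eps / 2)) by (apply Rmult_le_compat_l; lra).
      nra. }
  assert (Hg : is_lim_seq (fun k => q ^ k * a N) 0).
  { replace (Finite 0) with (Finite (0 * a N)) by (f_equal; ring).
    apply lim_scal_r, is_lim_seq_geom. rewrite Rabs_pos_eq; lra. }
  apply is_lim_seq_spec in Hg.
  assert (He2 : 0 < eps / 2) by (pose proof (cond_pos eps); lra).
  destruct (Hg (mkposreal _ He2)) as [K HK]. simpl in HK.
  exists (K + N)%nat. intros n Hn. replace n with ((n - N) + N)%nat by lia.
  specialize (HK (n - N)%nat ltac:(lia)). specialize (Hb (n - N)%nat).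
  rewrite Rminus_0_r in HK |- *. apply Rabs_def2 in HK.
  specialize (Ha ((n - N) + N)%nat). rewrite Rabs_pos_eq by lra. lra.
Qed.

Lemma div_lt1 a b : 0 < b -> a < b -> a / b < 1.
Proof. intros Hb Hab. apply (Rmult_lt_reg_r b); [lra|]. unfold Rdiv. rewrite Rmult_assoc, Rinv_l by lra. lra. Qed.

Lemma div_le1 a b : 0 < b -> a <= b -> a / b <= 1.
Proof. intros Hb Hab. apply (Rmult_le_reg_r b); [lra|]. unfold Rdiv. rewrite Rmult_assoc, Rinv_l by lra. lra. Qed.

Lemma div_nn a b : 0 <= a -> 0 < b -> 0 <= a / b.
Proof. intros. apply Rle_mult_inv_pos; auto. Qed.

Lemma mob x y m sigma : 0 <= x -> 0 < y -> 0 <= m -> 0 < sigma ->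
  Rabs (((m + 1) * (2 * y + sigma * x) / (m + 2) - (sigma * y + 2 * x)) /
        ((m + 1) * (2 * y + sigma * x) / (m + 2) + (sigma * y + 2 * x)))
  <= Rabs ((sigma - 2) / (sigma + 2)) * Rabs ((x - y) / (x + y)) + 2 / (m + 2).
Proof.
  intros Hx Hy Hm Hs.
  set (G := (2 * y + sigma * x) / (sigma * y + 2 * x)).
  set (c := (m + 1) / (m + 2)).
  assert (HG : 0 < G) by (unfold G; apply Rdiv_lt_0_compat; nra).
  assert (Hc : 0 < c < 1) by (unfold c; split; [apply Rdiv_lt_0_compat; lra | apply div_lt1; lra]).
  assert (E1 : ((m + 1) * (2 * y + sigma * x) / (m + 2) - (sigma * y + 2 * x)) /
        ((m + 1) * (2 * y + sigma * x) / (m + 2) + (sigma * y + 2 * x)) = (c * G - 1) / (c * G + 1)).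
  { assert (0 < 2 * y + sigma * x) by nra. assert (0 < sigma * y + 2 * x) by nra.
    assert (0 < (m + 1) * (2 * y + sigma * x)) by (apply Rmult_lt_0_compat; lra).
    assert (0 < (m + 2) * (sigma * y + 2 * x)) by (apply Rmult_lt_0_compat; lra).
    unfold c, G. field. repeat split; lra. }
  assert (E2 : (G - 1) / (G + 1) = ((sigma - 2) / (sigma + 2)) * ((x - y) / (x + y))).
  { unfold G. field. repeat split; nra. }
  assert (E3 : (c * G - 1) / (c * G + 1) - (G - 1) / (G + 1) = - (2 * (1 - c) * (G / ((c * G + 1) * (G + 1))))).
  { field. split; nra. }
  assert (B1 : 0 <= G / ((c * G + 1) * (G + 1)) <= 1).
  { split. apply div_nn; nra. apply div_le1; nra. }
  assert (Ec : 1 - c = 1 / (m + 2)) by (unfold c; field; lra).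
  rewrite E1.
  replace ((c * G - 1) / (c * G + 1)) with ((G - 1) / (G + 1) + - (2 * (1 - c) * (G / ((c * G + 1) * (G + 1)))))
    by (rewrite <- E3; ring).
  eapply Rle_trans; [apply Rabs_triang|]. rewrite E2, Rabs_mult, Rabs_Ropp.
  apply Rplus_le_compat_l. rewrite Rabs_pos_eq.
  - rewrite Ec. assert (0 < 1 / (m + 2)) by (apply Rdiv_lt_0_compat; lra).
    replace (2 / (m + 2)) with (2 * (1 / (m + 2)) * 1) by (field; lra).
    apply Rmult_le_compat_l; [lra | tauto].
  - assert (0 <= 1 - c) by lra. apply Rmult_le_pos; [lra | tauto].
Qed.

Definition sU sigma M := (U sigma M 1 - U sigma M 0) / (U sigma M 1 + U sigma M 0).

Lemma sU_lim sigma : 0 < sigma -> is_lim_seq (sU sigma) 0.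
Proof.
  intros Hs. apply is_lim_seq_abs_0.
  apply (contr _ (fun M => 2 / (INR M + 2)) (Rabs ((sigma - 2) / (sigma + 2)))).
  - split; [apply Rabs_pos|]. rewrite Rabs_div by lra. rewrite (Rabs_pos_eq (sigma + 2)) by lra.
    apply div_lt1; [lra|]. apply Rabs_def1; lra.
  - intros; apply Rabs_pos.
  - intros M. unfold sU. rewrite U_S0, U_S1.
    assert (E : U sigma M 2 = (INR M * U sigma M 0 - sigma * U sigma M 1) / (INR M + 2)).
    { rewrite <- U_2. field. pose proof (pos_INR M); lra. }
    rewrite E.
    pose proof (U_nonneg sigma M 1 ltac:(lra)). pose proof (U_pos0 sigma M Hs). pose proof (pos_INR M).
    replace (U sigma M 0 + sigma * U sigma M 1 + (INR M * U sigma M 0 - sigma * U sigma M 1) / (INR M + 2))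
      with ((INR M + 1) * (2 * U sigma M 0 + sigma * U sigma M 1) / (INR M + 2)) by (field; lra).
    eapply Rle_trans; [apply mob; lra|]. right. reflexivity.
  - replace (Finite 0) with (Finite (2 * 0)) by (f_equal; ring).
    apply lim_scal, lim_inv_lin.
Qed.

Definition A sigma M k := U sigma M k / (U sigma M 0 + U sigma M 1).

Lemma A_lim sigma : 0 < sigma -> forall k, is_lim_seq (fun M => A sigma M k) (1/2).
Proof.
  intros Hs.
  assert (Hd : forall M, 0 < U sigma M 0 + U sigma M 1).
  { intros M. pose proof (U_nonneg sigma M 1 ltac:(lra)). pose proof (U_pos0 sigma M Hs). lra. }
  assert (H01 : forall k, (k <= 1)%nat -> is_lim_seq (fun M => A sigma M k) (1/2)).
  { intros k Hk. pose proof (sU_lim sigma Hs) as HsU.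
    destruct k as [|[|k]]; [| |lia].
    - apply is_lim_seq_ext with (fun M => (1 - sU sigma M) / 2).
      + intros M. unfold A, sU. specialize (Hd M). field. lra.
      + replace (1/2) with ((1 - 0) / 2) by field.
        apply is_lim_seq_div'; [apply is_lim_seq_minus'; [apply is_lim_seq_const | exact HsU] | apply is_lim_seq_const | lra].
    - apply is_lim_seq_ext with (fun M => (1 + sU sigma M) / 2).
      + intros M. unfold A, sU. specialize (Hd M). field. lra.
      + replace (1/2) with ((1 + 0) / 2) by field.
        apply is_lim_seq_div'; [apply is_lim_seq_plus'; [apply is_lim_seq_const | exact HsU] | apply is_lim_seq_const | lra]. }
  assert (Hpair : forall k, is_lim_seq (fun M => A sigma M k) (1/2) /\ is_lim_seq (fun M => A sigma M (S k)) (1/2)).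
  { induction k as [|k [IH1 IH2]].
    - split; apply H01; lia.
    - split; [exact IH2|].
      apply is_lim_seq_ext with (fun M => ((INR M - INR k) / (INR M + INR k + 2)) * A sigma M k
                                          - (sigma * (INR k + 1)) * (/ (INR M + (INR k + 2))) * A sigma M (S k)).
      + intros M. unfold A. pose proof (u_rec3 sigma M (Z.of_nat k)) as H.
        rewrite <- INR_IZR_INZ in H. unfold U.
        replace (Z.of_nat (S (S k))) with (Z.of_nat k + 2)%Z by lia.
        replace (Z.of_nat (S k)) with (Z.of_nat k + 1)%Z by lia.
        specialize (Hd M). unfold U in Hd.
        assert (0 < INR M + INR k + 2) by (pose proof (pos_INR M); pose proof (pos_INR k); lra).
        assert (Hu2 : u sigma M (Z.of_nat k + 2) = ((INR M - INR k) * u sigma M (Z.of_nat k)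
            - sigma * (INR k + 1) * u sigma M (Z.of_nat k + 1)) / (INR M + INR k + 2)).
        { field_simplify_eq; [lra | lra]. }
        rewrite Hu2. field. split; lra.
      + replace (1/2) with (1 * (1/2) - (sigma * (INR k + 1)) * 0 * (1/2)) by ring.
        apply is_lim_seq_minus'.
        * apply is_lim_seq_mult'; [|exact IH1].
          apply is_lim_seq_ext with (fun M => (INR M + - INR k) / (INR M + (INR k + 2))).
          { intros M. unfold Rminus. f_equal. ring. }
          apply lim_ratio_lin.
        * apply is_lim_seq_mult'; [|exact IH2].
          replace (sigma * (INR k + 1) * 0) with (sigma * (INR k + 1) * 0) by ring.
          apply (is_lim_seq_scal_l _ (sigma * (INR k + 1)) 0), lim_inv_lin. }
  intros k. apply Hpair.
Qed.

Lemma abs_le_split x a : Rabs x <= a -> - a <= x <= a.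
Proof. unfold Rabs. destruct (Rcase_abs x); intros; lra. Qed.

Lemma series_lim (a : nat -> R) l : is_series a l -> is_lim_seq (fun n => sum_f_R0 a n) l.
Proof.
  intros H. apply is_lim_seq_ext with (sum_n a). intros n. apply sum_n_Reals. exact H.
Qed.

Lemma lim_sum_fin (f : nat -> nat -> R) (g : nat -> R) :
  (forall j, is_lim_seq (fun M => f M j) (g j)) ->
  forall N, is_lim_seq (fun M => sum_f_R0 (f M) N) (sum_f_R0 g N).
Proof.
  intros H N. induction N; simpl; [apply H|].
  apply is_lim_seq_plus'; [exact IHN | apply H].
Qed.

Lemma exs_dom (a D : nat -> R) : (forall k, Rabs (a k) <= D k) -> ex_series D -> ex_series a.
Proof.
  intros H HD. apply ex_series_Rabs. apply (ex_series_le (fun k => Rabs (a k)) D); [|exact HD].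
  intros k. rewrite Rabs_Rabsolu. apply H.
Qed.

Lemma tail_bound (a D : nat -> R) : (forall k, Rabs (a k) <= D k) -> ex_series D ->
  forall N, Rabs (Series a - sum_f_R0 a N) <= Series D - sum_f_R0 D N.
Proof.
  intros H HD N. assert (Ha := exs_dom a D H HD).
  assert (Hfin : forall n, Rabs (sum_f_R0 a (n + N) - sum_f_R0 a N) <= sum_f_R0 D (n + N) - sum_f_R0 D N).
  { induction n; simpl.
    - rewrite Rminus_diag, Rabs_R0. lra.
    - replace (sum_f_R0 a (n + N) + a (S (n + N)) - sum_f_R0 a N)
        with ((sum_f_R0 a (n + N) - sum_f_R0 a N) + a (S (n + N))) by ring.
      eapply Rle_trans; [apply Rabs_triang|]. specialize (H (S (n + N))). lra. }
  assert (L1 : is_lim_seq (fun n => Rabs (sum_f_R0 a (n + N) - sum_f_R0 a N)) (Rabs (Series a - sum_f_R0 a N))).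
  { apply (is_lim_seq_abs _ (Series a - sum_f_R0 a N)).
    apply is_lim_seq_minus'; [|apply is_lim_seq_const].
    apply (is_lim_seq_incr_n (fun n => sum_f_R0 a n) N). apply series_lim, Series_correct, Ha. }
  assert (L2 : is_lim_seq (fun n => sum_f_R0 D (n + N) - sum_f_R0 D N) (Series D - sum_f_R0 D N)).
  { apply is_lim_seq_minus'; [|apply is_lim_seq_const].
    apply (is_lim_seq_incr_n (fun n => sum_f_R0 D n) N). apply series_lim, Series_correct, HD. }
  exact (is_lim_seq_le _ _ _ _ Hfin L1 L2).
Qed.

Lemma dct (f : nat -> nat -> R) (g D : nat -> R) :
  (forall h, is_lim_seq (fun M => f M h) (g h)) ->
  (forall M h, Rabs (f M h) <= D h) -> ex_series D ->
  is_lim_seq (fun M => Series (f M)) (Series g).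
Proof.
  intros Hl Hb HD.
  assert (Hg : forall h, Rabs (g h) <= D h).
  { intros h. assert (L := is_lim_seq_abs _ _ (Hl h)).
    exact (is_lim_seq_le _ _ _ _ (fun M => Hb M h) L (is_lim_seq_const (D h))). }
  apply is_lim_seq_spec. intros eps.
  assert (He3 : 0 < eps / 3) by (pose proof (cond_pos eps); lra).
  assert (HT := series_lim D _ (Series_correct D HD)).
  apply is_lim_seq_spec in HT. destruct (HT (mkposreal _ He3)) as [N HN]. simpl in HN.
  specialize (HN N (le_n N)).
  assert (HF := lim_sum_fin f g Hl N). apply is_lim_seq_spec in HF.
  destruct (HF (mkposreal _ He3)) as [M0 HM0]. simpl in HM0.
  exists M0. intros M HM. specialize (HM0 M HM).
  pose proof (tail_bound (f M) D (Hb M) HD N) as T1.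
  pose proof (tail_bound g D Hg HD N) as T2.
  apply Rabs_def2 in HN. apply Rabs_def2 in HM0.
  apply Rabs_def1.
  - apply abs_le_split in T1. apply abs_le_split in T2. lra.
  - apply abs_le_split in T1. apply abs_le_split in T2. lra.
Qed.

Lemma assemble (F : nat -> nat -> R) (N : nat -> R) (r0 lam kap : R) (phi D : nat -> R) :
  (forall M, 0 < N M) -> 0 < lam -> 0 < kap ->
  is_lim_seq (fun M => N (S M) / N M) lam ->
  (forall h, is_lim_seq (fun M => F M h / N M) (kap * phi h)) ->
  (forall M h, Rabs (r0 ^ h * (F M h / N M)) <= D h) -> ex_series D ->
  0 < Series (fun h => r0 ^ h * phi h) ->
  forall K m, is_lim_seq (fun L => F (L - K)%nat m / Series (fun h => r0 ^ h * F L h))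
    (phi m / (lam ^ K * Series (fun h => r0 ^ h * phi h))).
Proof.
  intros HN Hlam Hkap Hrat HF HD HDs HS K m.
  set (SS := Series (fun h => r0 ^ h * phi h)) in *.
  assert (HSer : is_lim_seq (fun L => Series (fun h => r0 ^ h * F L h) / N L) (kap * SS)).
  { apply is_lim_seq_ext with (fun L => Series (fun h => r0 ^ h * (F L h / N L))).
    - intros L. unfold Rdiv. rewrite <- Series_scal_r. apply Series_ext. intros h. ring.
    - replace (kap * SS) with (Series (fun h => r0 ^ h * (kap * phi h))).
      + apply (dct (fun L h => r0 ^ h * (F L h / N L)) (fun h => r0 ^ h * (kap * phi h)) D); auto.
        intros h. apply lim_scal, HF.
      + unfold SS. rewrite <- Series_scal_l. apply Series_ext. intros h. ring. }
  assert (HR : forall K, is_lim_seq (fun L => N L / N (L + K)%nat) (/ lam ^ K)).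
  { induction K0 as [|K0 IH].
    - simpl. apply is_lim_seq_ext with (fun _ => 1).
      + intros L. rewrite Nat.add_0_r. specialize (HN L). field. lra.
      + rewrite Rinv_1. apply is_lim_seq_const.
    - apply is_lim_seq_ext with (fun L => (N L / N (L + K0)%nat) * / (N (S (L + K0)) / N (L + K0)%nat)).
      + intros L. rewrite Nat.add_succ_r. pose proof (HN L). pose proof (HN (L + K0)%nat).
        pose proof (HN (S (L + K0))). field. lra.
      + replace (/ lam ^ S K0) with (/ lam ^ K0 * / lam) by (simpl; field; split; [apply pow_nonzero|]; lra).
        apply is_lim_seq_mult'; [exact IH|].
        apply (is_lim_seq_inv _ lam); [|intro E; injection E; lra].
        apply (is_lim_seq_incr_n (fun M => N (S M) / N M) K0). exact Hrat. }
  apply (is_lim_seq_incr_n _ K).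
  assert (HSK := proj1 (is_lim_seq_incr_n _ K _) HSer). simpl in HSK.
  assert (Hpos : eventually (fun n => 0 < Series (fun h => r0 ^ h * F (n + K)%nat h) / N (n + K)%nat)).
  { apply is_lim_seq_spec in HSK.
    assert (Hk2 : 0 < kap * SS / 2) by (apply Rdiv_lt_0_compat; [apply Rmult_lt_0_compat|]; lra).
    destruct (HSK (mkposreal _ Hk2)) as [N0 HN0]. exists N0. intros n Hn.
    specialize (HN0 n Hn). simpl in HN0. apply Rabs_def2 in HN0.
    assert (0 < kap * SS) by (apply Rmult_lt_0_compat; lra). lra. }
  apply is_lim_seq_ext_loc with
    (fun n => (F n m / N n) * (N n / N (n + K)%nat) / (Series (fun h => r0 ^ h * F (n + K)%nat h) / N (n + K)%nat)).
  - destruct Hpos as [N0 HN0]. exists N0. intros n Hn. specialize (HN0 n Hn).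
    rewrite Nat.add_sub. pose proof (HN n). pose proof (HN (n + K)%nat).
    assert (0 < Series (fun h => r0 ^ h * F (n + K)%nat h)).
    { apply (Rmult_lt_reg_r (/ N (n + K)%nat)); [apply Rinv_0_lt_compat; lra|]. rewrite Rmult_0_l. exact HN0. }
    field. repeat split; lra.
  - replace (phi m / (lam ^ K * SS)) with ((kap * phi m) * (/ lam ^ K) / (kap * SS)).
    + apply is_lim_seq_div'.
      * apply is_lim_seq_mult'; [apply HF | apply HR].
      * exact HSK.
      * apply Rgt_not_eq. apply Rmult_lt_0_compat; lra.
    + field. repeat split; try lra. apply pow_nonzero; lra.
Qed.

Definition phi (rho : R) (n : nat) : R := sum_f_R0 (fun j => rho ^ j * (/ rho) ^ (n - j)) n.

Lemma phi_S rho n : phi rho (S n) = / rho * phi rho n + rho ^ (S n).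
Proof.
  unfold phi. rewrite tech5. rewrite Nat.sub_diag. simpl pow at 3. rewrite Rmult_1_r. f_equal.
  rewrite scal_sum. apply sum_eq. intros i Hi. replace (S n - i)%nat with (S (n - i)) by lia.
  simpl. ring.
Qed.

Lemma phi_pos rho n : 0 < rho -> 0 < phi rho n.
Proof.
  intros Hr. induction n.
  - unfold phi. simpl. lra.
  - rewrite phi_S. assert (0 < / rho) by (apply Rinv_0_lt_compat; lra).
    assert (0 < rho ^ S n) by (apply pow_lt; lra). nra.
Qed.

Lemma phi_1 n : phi 1 n = INR n + 1.
Proof.
  induction n.
  - unfold phi. simpl. ring.
  - rewrite phi_S, IHn, S_INR, pow1, Rinv_1. ring.
Qed.

Lemma phi_closed rho n : rho <> 0 -> (rho - / rho) * phi rho n = rho ^ (S n) - / rho ^ (S n).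
Proof.
  intros Hr. induction n.
  - unfold phi. simpl. field. auto.
  - rewrite phi_S. transitivity (/ rho * ((rho - / rho) * phi rho n) + (rho - / rho) * rho ^ S n); [ring|].
    rewrite IHn. simpl. field. split; auto. apply pow_nonzero; auto.
Qed.

Lemma Z0law_eq r0 rho n : 0 < rho ->
  Z0law r0 rho n = (1 - r0 * rho) * (1 - r0 / rho) * r0 ^ n * phi rho n.
Proof.
  intros Hr. unfold Z0law, phi, geom. rewrite scal_sum. apply sum_eq. intros i Hi.
  replace n with (i + (n - i))%nat at 3 by lia. rewrite pow_add.
  unfold Rdiv. rewrite !Rpow_mult_distr. ring.
Qed.

Lemma is_series_phi r0 rho : 0 < r0 -> 0 < rho -> r0 * rho < 1 -> r0 / rho < 1 ->
  is_series (fun h => r0 ^ h * phi rho h) (/ (1 - r0 * rho) * / (1 - r0 / rho)).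
Proof.
  intros H0 Hr H1 H2.
  assert (Hq : 0 < r0 / rho) by (apply Rdiv_lt_0_compat; lra).
  assert (Hp : 0 < r0 * rho) by (apply Rmult_lt_0_compat; lra).
  eapply is_series_ext; [|apply (is_series_mult (fun n => (r0 * rho) ^ n) (fun n => (r0 / rho) ^ n))].
  - intros h. simpl. unfold phi. rewrite scal_sum. apply sum_eq. intros i Hi.
    replace h with (i + (h - i))%nat at 3 by lia. rewrite pow_add.
    unfold Rdiv. rewrite !Rpow_mult_distr. ring.
  - apply is_series_geom. rewrite Rabs_pos_eq; lra.
  - apply is_series_geom. rewrite Rabs_pos_eq; lra.
  - eapply ex_series_ext; [|exists (/ (1 - r0 * rho)); apply is_series_geom; rewrite Rabs_pos_eq; lra].
    intros n. rewrite Rabs_pos_eq; [reflexivity|]. apply pow_le; lra.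
  - eapply ex_series_ext; [|exists (/ (1 - r0 / rho)); apply is_series_geom; rewrite Rabs_pos_eq; lra].
    intros n. rewrite Rabs_pos_eq; [reflexivity|]. apply pow_le; lra.
Qed.

Ltac side_pow := repeat split;
  first [ lra
        | apply pow_nonzero; lra
        | match goal with |- ?x ^ ?k * ?x ^ ?k - 1 <> 0 =>
            assert (1 < x ^ k) by (apply Rlt_pow_R1; [lra|lia]); nra end
        | nra ].

Lemma Qker_eq rho sigma a b : 0 < sigma -> (rho = 1 \/ 1 < rho) ->
  Qker rho sigma a b = tk sigma a b * phi rho b / ((rho + / rho + sigma) * phi rho a).
Proof.
  intros Hs Hr. unfold Qker, tk.
  assert (Hrp : 0 < rho) by lra.
  pose proof (phi_pos rho a Hrp). pose proof (phi_pos rho b Hrp).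
  assert (0 < rho + / rho + sigma) by (pose proof (Rinv_0_lt_compat rho Hrp); lra).
  destruct (Rle_dec rho 1) as [Hle|Hle].
  - assert (rho = 1) by lra. subst rho. rewrite !phi_1, Rinv_1.
    destruct (Nat.eqb_spec b (S a)).
    + subst b. rewrite !plus_INR, !S_INR, ?INR_1, ?INR_0. field. pose proof (pos_INR a). repeat split; lra.
    + destruct (Nat.eqb_spec b a).
      * subst b. field. pose proof (pos_INR a). repeat split; lra.
      * destruct (Nat.eqb_spec (S b) a); [|unfold Rdiv; rewrite !Rmult_0_l; reflexivity].
        subst a. rewrite !plus_INR, !S_INR, ?INR_1, ?INR_0. field. pose proof (pos_INR b). repeat split; lra.
  - assert (Hr1 : 1 < rho) by lra.
    assert (Hd : rho - / rho <> 0).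
    { assert (/ rho < 1) by (rewrite <- Rinv_1; apply Rinv_lt_contravar; lra). lra. }
    assert (Hc : forall n, phi rho n = (rho ^ S n - / rho ^ S n) / (rho - / rho)).
    { intros n. rewrite <- phi_closed by lra. field. split; [lra | nra]. }
    assert (Hl : 0 < rho + / rho + sigma -> True) by auto.
    destruct (Nat.eqb_spec b (S a)).
    + subst b. rewrite !Hc. replace (a + 2)%nat with (S (S a)) by lia. replace (a + 1)%nat with (S a) by lia.
      field. side_pow.
    + destruct (Nat.eqb_spec b a).
      * subst b. field. side_pow.
      * destruct (Nat.eqb_spec (S b) a); [|unfold Rdiv; rewrite !Rmult_0_l; reflexivity].
        subst a. rewrite !Hc. replace (S b + 1)%nat with (S (S b)) by lia. field. side_pow.
Qed.

Lemma chain_tele (t : nat -> nat -> R) (ph : nat -> R) lam n K :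
  (forall k, ph k <> 0) -> lam <> 0 ->
  chain_prod (fun a b => t a b * ph b / (lam * ph a)) n K =
  chain_prod t n K * ph (n K) / (lam ^ K * ph (n 0%nat)).
Proof.
  intros Hp Hl. induction K; simpl.
  - field. auto.
  - rewrite IHK. field. repeat split; auto. apply pow_nonzero; auto.
Qed.

Lemma Fg_scal sigma c b M : forall h, Fg sigma (fun x => c * b x) M h = c * Fg sigma b M h.
Proof. induction M; intros h; simpl; [reflexivity|]. destruct h; rewrite !IHM; ring. Qed.

Lemma Fg_add sigma b1 b2 M : forall h, Fg sigma (fun x => b1 x + b2 x) M h = Fg sigma b1 M h + Fg sigma b2 M h.
Proof. induction M; intros h; simpl; [reflexivity|]. destruct h; rewrite !IHM; ring. Qed.

Lemma Fg_zero sigma M h : Fg sigma (fun _ => 0) M h = 0.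
Proof.
  rewrite (Fg_ext sigma (fun _ => 0) (fun x => 0 * 0) M) by (intros; ring).
  rewrite Fg_scal. ring.
Qed.

Lemma lim_plus0 (v : nat -> R) c : is_lim_seq v 0 -> is_lim_seq (fun n => c + v n) c.
Proof.
  intros H. assert (L := is_lim_seq_plus' _ _ _ _ (is_lim_seq_const c) H). simpl in L.
  rewrite Rplus_0_r in L. exact L.
Qed.

Lemma pow_le1 x n : 0 <= x <= 1 -> x ^ n <= 1.
Proof. intros H. induction n; simpl; [lra|]. pose proof (pow_le x n ltac:(lra)). nra. Qed.

Lemma case_gt sigma rho0 rho1 : 0 < sigma -> 0 < rho0 -> rho0 * rho1 < 1 -> 1 < rho1 ->
  exists (N : nat -> R) (kap : R) (D : nat -> R),
    (forall M, 0 < N M) /\ 0 < kap /\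
    is_lim_seq (fun M => N (S M) / N M) (rho1 + / rho1 + sigma) /\
    (forall h, is_lim_seq (fun M => F sigma rho1 M h / N M) (kap * phi rho1 h)) /\
    (forall M h, Rabs (rho0 ^ h * (F sigma rho1 M h / N M)) <= D h) /\ ex_series D.
Proof.
  intros Hs H0 H01 H1.
  set (mu := rho1 + / rho1 + sigma).
  assert (Hi : 0 < / rho1 < 1) by (split; [apply Rinv_0_lt_compat; lra | rewrite <- Rinv_1; apply Rinv_lt_contravar; lra]).
  assert (Hmu2 : 2 + sigma < mu).
  { unfold mu. assert (rho1 * (rho1 + / rho1) = rho1 * rho1 + 1) by (field; lra).
    assert (rho1 + / rho1 > 2) by nra. lra. }
  assert (Hmu : 0 < mu) by lra.
  set (kap := (rho1 - / rho1) / rho1).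
  set (psi := fun x : nat => rho1 ^ x - (/ rho1) ^ (x + 2)).
  assert (Hpsi : forall x, psi x = kap * phi rho1 x).
  { intros x. unfold kap, psi. unfold Rdiv. rewrite Rmult_comm, <- Rmult_assoc.
    rewrite (Rmult_comm (phi rho1 x)), phi_closed by lra.
    rewrite pow_add, <- Rinv_pow by lra. simpl. field. split; [lra|]. apply pow_nonzero; lra. }
  assert (HFg : forall M h, Fg sigma psi M h = mu ^ M * psi h).
  { apply Fg_harm.
    - unfold psi, mu. simpl. field. lra.
    - intros h. unfold psi, mu. rewrite !pow_add. simpl. field. lra. }
  set (b2 := fun x : nat => (/ rho1) ^ x).
  assert (Hsplit : forall M h, F sigma rho1 M h = mu ^ M * psi h + (/ rho1) ^ 2 * Fg sigma b2 M h).
  { intros M h. rewrite F_Fg.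
    rewrite (Fg_ext sigma _ (fun x => 1 * psi x + (/ rho1) ^ 2 * b2 x)).
    - rewrite Fg_lin, HFg. ring.
    - intros x. unfold psi, b2. rewrite pow_add. ring. }
  assert (Hb2 : forall M h, 0 <= Fg sigma b2 M h <= (2 + sigma) ^ M).
  { intros M h. split.
    - apply Fg_nonneg; [lra|]. intros x. unfold b2. apply pow_le. lra.
    - assert (G : Fg sigma b2 M h <= (1 + / 1 + sigma) ^ M * 1 ^ h).
      { apply Fg_le_geom; [lra|lra|]. intros x. unfold b2. rewrite pow1. split; [apply pow_le; lra|].
        apply pow_le1. lra. }
      rewrite Rinv_1, pow1, Rmult_1_r in G. replace (1 + 1 + sigma) with (2 + sigma) in G by ring.
      exact G. }
  assert (Hmup : forall M, 0 < mu ^ M) by (intros; apply pow_lt; lra).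
  exists (fun M => mu ^ M), kap, (fun h => (rho0 * rho1) ^ h).
  split; [exact Hmup|]. split.
  { unfold kap. apply Rdiv_lt_0_compat; lra. }
  split.
  { apply is_lim_seq_ext with (fun _ => mu); [|apply is_lim_seq_const].
    intros M. simpl. field. apply pow_nonzero. lra. }
  split.
  { intros h. rewrite <- Hpsi.
    apply is_lim_seq_ext with (fun M => psi h + (/ rho1) ^ 2 * Fg sigma b2 M h / mu ^ M).
    { intros M. rewrite Hsplit. field. split; [lra | apply pow_nonzero; lra]. }
    apply lim_plus0.
    set (q := (2 + sigma) * / mu).
    assert (Hq : 0 <= q < 1).
    { unfold q. split. apply Rle_mult_inv_pos; lra.
      apply (Rmult_lt_reg_r mu); [lra|]. rewrite Rmult_assoc, Rinv_l by lra. lra. }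
    apply is_lim_seq_le_le with (fun _ => 0) (fun M => (/ rho1) ^ 2 * q ^ M).
    - intros M. specialize (Hb2 M h). pose proof (Hmup M).
      assert (Hc : 0 < (/ rho1) ^ 2) by (apply pow_lt; lra).
      split.
      + apply Rle_mult_inv_pos; [|lra]. apply Rmult_le_pos; lra.
      + unfold q. rewrite Rpow_mult_distr.
        replace ((/ mu) ^ M) with (/ mu ^ M) by (rewrite pow_inv; reflexivity).
        unfold Rdiv. rewrite Rmult_assoc. apply Rmult_le_compat_l; [lra|].
        apply Rmult_le_compat_r; [left; apply Rinv_0_lt_compat; lra | lra].
    - apply is_lim_seq_const.
    - replace (Finite 0) with (Finite ((/ rho1) ^ 2 * 0)) by (f_equal; ring).
      apply lim_scal, is_lim_seq_geom. rewrite Rabs_pos_eq; lra. }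
  split.
  { intros M h. pose proof (Hmup M).
    assert (Hn : 0 <= F sigma rho1 M h).
    { rewrite F_Fg. apply Fg_nonneg; [lra|]. intros x. apply pow_le. lra. }
    assert (Hu : F sigma rho1 M h <= mu ^ M * rho1 ^ h).
    { rewrite F_Fg. apply Fg_le_geom; [lra|lra|]. intros x. split; [apply pow_le; lra | lra]. }
    rewrite Rabs_pos_eq.
    - rewrite Rpow_mult_distr. apply Rmult_le_compat_l; [apply pow_le; lra|].
      apply (Rmult_le_reg_r (mu ^ M)); [lra|]. unfold Rdiv. rewrite Rmult_assoc, Rinv_l by lra. lra.
    - apply Rmult_le_pos; [apply pow_le; lra|]. apply Rle_mult_inv_pos; lra. }
  exists (/ (1 - rho0 * rho1)). apply is_series_geom.
  assert (0 < rho0 * rho1) by (apply Rmult_lt_0_compat; lra). rewrite Rabs_pos_eq; lra.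
Qed.

Lemma exs_scal (c : R) (a : nat -> R) : ex_series a -> ex_series (fun n => c * a n).
Proof. intros [l H]. exists (c * l). apply (is_series_scal_l c a l H). Qed.

Lemma F_eq1 sigma M h : F sigma 1 M h = sum_f_R0 (fun j => U sigma M j + U sigma M (S j)) h.
Proof.
  rewrite F_Fg. symmetry. revert M h.
  apply (Fg_unique sigma _ (fun M h => sum_f_R0 (fun j => U sigma M j + U sigma M (S j)) h)).
  - intros h. rewrite pow1. induction h.
    + simpl. rewrite !U_0. simpl. ring.
    + rewrite tech5, IHh, !U_0. simpl. ring.
  - intros M. simpl. rewrite U_S0, U_S1. ring.
  - intros M h. induction h.
    + simpl. rewrite U_S0, U_S1, (U_SS sigma M 1). ring.
    + rewrite (tech5 _ (S h)), IHh, !tech5. cbv beta.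
      rewrite !U_SS. ring.
Qed.

Lemma A_le sigma M k : 0 < sigma -> 0 <= A sigma M k <= 1.
Proof.
  intros Hs. unfold A. pose proof (U_nonneg sigma M 1 ltac:(lra)). pose proof (U_pos0 sigma M Hs).
  pose proof (U_nonneg sigma M k ltac:(lra)). pose proof (U_le01 sigma M k ltac:(lra)).
  split; [apply Rle_mult_inv_pos; lra | apply div_le1; lra].
Qed.

Lemma ratio_U sigma : 0 < sigma ->
  is_lim_seq (fun M => (U sigma (S M) 0 + U sigma (S M) 1) / (U sigma M 0 + U sigma M 1)) (2 + sigma).
Proof.
  intros Hs.
  apply is_lim_seq_ext with (fun M => (sigma + 1) * A sigma M 0 + (sigma + 2) * A sigma M 1 + A sigma M 2).
  - intros M. unfold A. rewrite U_S0, U_S1.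
    pose proof (U_nonneg sigma M 1 ltac:(lra)). pose proof (U_pos0 sigma M Hs). field. lra.
  - replace (2 + sigma) with ((sigma + 1) * (1/2) + (sigma + 2) * (1/2) + 1/2) by field.
    apply is_lim_seq_plus'; [apply is_lim_seq_plus'|]; try apply lim_scal; apply A_lim; exact Hs.
Qed.

Lemma case_eq sigma rho0 : 0 < sigma -> 0 < rho0 -> rho0 < 1 ->
  exists (N : nat -> R) (kap : R) (D : nat -> R),
    (forall M, 0 < N M) /\ 0 < kap /\
    is_lim_seq (fun M => N (S M) / N M) (1 + / 1 + sigma) /\
    (forall h, is_lim_seq (fun M => F sigma 1 M h / N M) (kap * phi 1 h)) /\
    (forall M h, Rabs (rho0 ^ h * (F sigma 1 M h / N M)) <= D h) /\ ex_series D.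
Proof.
  intros Hs H0 H01.
  assert (Hd : forall M, 0 < U sigma M 0 + U sigma M 1).
  { intros M. pose proof (U_nonneg sigma M 1 ltac:(lra)). pose proof (U_pos0 sigma M Hs). lra. }
  assert (HFA : forall M h, F sigma 1 M h / (U sigma M 0 + U sigma M 1) =
                sum_f_R0 (fun j => A sigma M j + A sigma M (S j)) h).
  { intros M h. rewrite F_eq1. unfold Rdiv. rewrite Rmult_comm, scal_sum. apply sum_eq.
    intros i _. unfold A. unfold Rdiv. ring. }
  exists (fun M => U sigma M 0 + U sigma M 1), 1, (fun h => 2 * (rho0 ^ h * phi 1 h)).
  split; [exact Hd|]. split; [lra|]. split.
  { rewrite Rinv_1. replace (1 + 1 + sigma) with (2 + sigma) by ring. apply ratio_U; exact Hs. }
  split.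
  { intros h. apply is_lim_seq_ext with (fun M => sum_f_R0 (fun j => A sigma M j + A sigma M (S j)) h).
    - intros M. symmetry. apply HFA.
    - replace (1 * phi 1 h) with (sum_f_R0 (fun _ => 1/2 + 1/2) h).
      + apply (lim_sum_fin (fun M j => A sigma M j + A sigma M (S j))). intros j.
        apply is_lim_seq_plus'; apply A_lim; exact Hs.
      + rewrite sum_cte, phi_1, S_INR. field. }
  split.
  { intros M h. rewrite HFA.
    assert (B : 0 <= sum_f_R0 (fun j => A sigma M j + A sigma M (S j)) h <= sum_f_R0 (fun _ => 2) h).
    { split.
      - apply cond_pos_sum. intros j. pose proof (A_le sigma M j Hs). pose proof (A_le sigma M (S j) Hs). lra.
      - apply sum_Rle. intros j _. pose proof (A_le sigma M j Hs). pose proof (A_le sigma M (S j) Hs). lra. }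
    rewrite sum_cte in B. rewrite phi_1, S_INR in *.
    pose proof (pow_le rho0 h ltac:(lra)).
    rewrite Rabs_pos_eq by (apply Rmult_le_pos; lra).
    replace (2 * (rho0 ^ h * (INR h + 1))) with (rho0 ^ h * (2 * (INR h + 1))) by ring.
    apply Rmult_le_compat_l; lra. }
  apply exs_scal. exists (/ (1 - rho0 * 1) * / (1 - rho0 / 1)). apply is_series_phi; lra.
Qed.

Definition Ee (e x : nat) : R := if Nat.eqb x e then 1 else 0.
Definition W sigma M h e := Fg sigma (Ee e) M h.

Lemma sumE (c : nat -> R) x B : sum_f_R0 (fun e => c e * Ee e x) B = if Nat.leb x B then c x else 0.
Proof.
  unfold Ee. induction B.
  - simpl. destruct (Nat.eqb_spec x 0); subst; simpl; [ring|]. destruct x; [lia|]. simpl. ring.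
  - rewrite tech5, IHB. destruct (Nat.leb_spec x B), (Nat.eqb_spec x (S B)), (Nat.leb_spec x (S B));
      try lia; try ring. subst. ring.
Qed.

Lemma Fg_sumE sigma (c : nat -> R) M h B :
  Fg sigma (fun x => sum_f_R0 (fun e => c e * Ee e x) B) M h = sum_f_R0 (fun e => c e * W sigma M h e) B.
Proof.
  induction B.
  - simpl. unfold W. apply Fg_scal.
  - rewrite tech5, <- IHB.
    rewrite (Fg_ext sigma _ (fun x => sum_f_R0 (fun e => c e * Ee e x) B + c (S B) * Ee (S B) x)).
    + rewrite Fg_add, Fg_scal. reflexivity.
    + intros x. apply tech5.
Qed.

Lemma W_zero sigma M h e : (h + M < e)%nat -> W sigma M h e = 0.
Proof.
  intros He. unfold W. rewrite (Fg_local sigma (Ee e) (fun _ => 0) (h + M)).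
  - apply Fg_zero.
  - intros x Hx. unfold Ee. destruct (Nat.eqb_spec x e); [lia|reflexivity].
  - lia.
Qed.

Lemma F_series sigma rho1 M h : is_series (fun e => rho1 ^ e * W sigma M h e) (F sigma rho1 M h).
Proof.
  rewrite F_Fg.
  rewrite (Fg_local sigma _ (fun x => sum_f_R0 (fun e => rho1 ^ e * Ee e x) (h + M)) (h + M)).
  - rewrite Fg_sumE. apply is_series_fin. intros k Hk. rewrite W_zero by lia. ring.
  - intros x Hx. rewrite sumE. destruct (Nat.leb_spec x (h + M)); [reflexivity|lia].
  - lia.
Qed.

Definition Tn sigma M k := (INR M + 2) * (U sigma M k - U sigma M (k + 2)) / (U sigma M 0 + U sigma M 1).

Lemma Tn_eq sigma M k : 0 < sigma -> Tn sigma M k =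
  (INR k + 1) * ((INR M + 2) / (INR M + (INR k + 2))) * (2 * A sigma M k + sigma * A sigma M (S k)).
Proof.
  intros Hs. unfold Tn, A. rewrite U_delta.
  pose proof (U_nonneg sigma M 1 ltac:(lra)). pose proof (U_pos0 sigma M Hs).
  pose proof (pos_INR M). pose proof (pos_INR k).
  field. repeat split; lra.
Qed.

Lemma Tn_lim sigma k : 0 < sigma -> is_lim_seq (fun M => Tn sigma M k) ((INR k + 1) * ((2 + sigma) / 2)).
Proof.
  intros Hs. apply is_lim_seq_ext with
    (fun M => (INR k + 1) * ((INR M + 2) / (INR M + (INR k + 2))) * (2 * A sigma M k + sigma * A sigma M (S k))).
  - intros M. symmetry. apply Tn_eq. exact Hs.
  - replace ((INR k + 1) * ((2 + sigma) / 2)) with ((INR k + 1) * 1 * (2 * (1/2) + sigma * (1/2))) by field.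
    apply is_lim_seq_mult'; [apply lim_scal, lim_ratio_lin|].
    apply is_lim_seq_plus'; apply lim_scal, A_lim; exact Hs.
Qed.

Lemma Tn_bnd sigma M k : 0 < sigma -> 0 <= Tn sigma M k <= (INR k + 1) * (2 + sigma).
Proof.
  intros Hs. rewrite Tn_eq by exact Hs.
  pose proof (A_le sigma M k Hs). pose proof (A_le sigma M (S k) Hs).
  pose proof (pos_INR M). pose proof (pos_INR k).
  assert (0 <= (INR M + 2) / (INR M + (INR k + 2)) <= 1).
  { split; [apply Rle_mult_inv_pos; lra | apply div_le1; lra]. }
  assert (0 <= 2 * A sigma M k + sigma * A sigma M (S k) <= 2 + sigma) by nra.
  split.
  - apply Rmult_le_pos; [apply Rmult_le_pos|]; lra.
  - rewrite Rmult_assoc. apply Rmult_le_compat_l; [lra|]. nra.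
Qed.

Definition Dn sigma M a j := (INR M + 2) * (U sigma M a - U sigma M (a + 2 * j)) / (U sigma M 0 + U sigma M 1).

Lemma Dn_S sigma M a j : Dn sigma M a (S j) = Dn sigma M a j + Tn sigma M (a + 2 * j).
Proof.
  unfold Dn, Tn. replace (a + 2 * S j)%nat with (a + 2 * j + 2)%nat by lia.
  unfold Rdiv. ring.
Qed.

Lemma Dn_lim sigma a j : 0 < sigma ->
  is_lim_seq (fun M => Dn sigma M a j) ((2 + sigma) / 2 * (INR j * (INR a + INR j))).
Proof.
  intros Hs. induction j.
  - apply is_lim_seq_ext with (fun _ => 0).
    + intros M. unfold Dn. rewrite Nat.mul_0_r, Nat.add_0_r. unfold Rdiv. ring.
    + simpl. replace ((2 + sigma) / 2 * (0 * (INR a + 0))) with 0 by ring. apply is_lim_seq_const.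
  - apply is_lim_seq_ext with (fun M => Dn sigma M a j + Tn sigma M (a + 2 * j)).
    + intros M. symmetry. apply Dn_S.
    + replace ((2 + sigma) / 2 * (INR (S j) * (INR a + INR (S j)))) with
        ((2 + sigma) / 2 * (INR j * (INR a + INR j)) + (INR (a + 2 * j) + 1) * ((2 + sigma) / 2)).
      * apply is_lim_seq_plus'; [exact IHj | apply Tn_lim; exact Hs].
      * rewrite plus_INR, mult_INR, !S_INR, INR_0. field.
Qed.

Lemma Dn_bnd sigma M a j : 0 < sigma ->
  0 <= Dn sigma M a j <= (2 + sigma) * (INR j * (INR a + INR j)).
Proof.
  intros Hs. induction j.
  - unfold Dn. rewrite Nat.mul_0_r, Nat.add_0_r. simpl. unfold Rdiv. split; right; ring.
  - rewrite Dn_S. pose proof (Tn_bnd sigma M (a + 2 * j) Hs).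
    rewrite plus_INR, mult_INR, !S_INR, INR_0 in H. rewrite S_INR. split; nra.
Qed.

Lemma W_Dn sigma M h e : W sigma M h e =
  if Nat.leb e h then U sigma M (h - e) - U sigma M ((h - e) + 2 * S e)
  else U sigma M (e - h) - U sigma M ((e - h) + 2 * S h).
Proof.
  unfold W, Ee.
  rewrite w_refl. unfold U. destruct (Nat.leb_spec e h).
  - rewrite <- u_sym. f_equal; f_equal; lia.
  - f_equal; f_equal; lia.
Qed.

Definition Wn sigma M h e := (INR M + 2) * W sigma M h e / (U sigma M 0 + U sigma M 1).

Lemma Wn_Dn sigma M h e : Wn sigma M h e =
  if Nat.leb e h then Dn sigma M (h - e) (S e) else Dn sigma M (e - h) (S h).
Proof. unfold Wn, Dn. rewrite W_Dn. destruct (Nat.leb e h); reflexivity. Qed.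

Lemma Wn_lim sigma h e : 0 < sigma ->
  is_lim_seq (fun M => Wn sigma M h e) ((2 + sigma) / 2 * ((INR h + 1) * (INR e + 1))).
Proof.
  intros Hs. apply is_lim_seq_ext with
    (fun M => if Nat.leb e h then Dn sigma M (h - e) (S e) else Dn sigma M (e - h) (S h)).
  - intros M. symmetry. apply Wn_Dn.
  - destruct (Nat.leb_spec e h).
    + replace ((INR h + 1) * (INR e + 1)) with (INR (S e) * (INR (h - e) + INR (S e))).
      * apply Dn_lim; exact Hs.
      * rewrite minus_INR by lia. rewrite S_INR. ring.
    + replace ((INR h + 1) * (INR e + 1)) with (INR (S h) * (INR (e - h) + INR (S h))).
      * apply Dn_lim; exact Hs.
      * rewrite minus_INR by lia. rewrite S_INR. ring.
Qed.

Lemma Wn_bnd sigma M h e : 0 < sigma ->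
  0 <= Wn sigma M h e <= (2 + sigma) * ((INR h + 1) * (INR e + 1)).
Proof.
  intros Hs. rewrite Wn_Dn. destruct (Nat.leb_spec e h).
  - replace ((INR h + 1) * (INR e + 1)) with (INR (S e) * (INR (h - e) + INR (S e))).
    + apply Dn_bnd; exact Hs.
    + rewrite minus_INR by lia. rewrite S_INR. ring.
  - replace ((INR h + 1) * (INR e + 1)) with (INR (S h) * (INR (e - h) + INR (S h))).
    + apply Dn_bnd; exact Hs.
    + rewrite minus_INR by lia. rewrite S_INR. ring.
Qed.

Lemma case_lt sigma rho0 rho1 : 0 < sigma -> 0 < rho0 -> rho0 < 1 -> 0 < rho1 -> rho1 < 1 ->
  exists (N : nat -> R) (kap : R) (D : nat -> R),
    (forall M, 0 < N M) /\ 0 < kap /\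
    is_lim_seq (fun M => N (S M) / N M) (1 + / 1 + sigma) /\
    (forall h, is_lim_seq (fun M => F sigma rho1 M h / N M) (kap * phi 1 h)) /\
    (forall M h, Rabs (rho0 ^ h * (F sigma rho1 M h / N M)) <= D h) /\ ex_series D.
Proof.
  intros Hs H0 H01 H1 H11.
  assert (Hd : forall M, 0 < U sigma M 0 + U sigma M 1).
  { intros M. pose proof (U_nonneg sigma M 1 ltac:(lra)). pose proof (U_pos0 sigma M Hs). lra. }
  set (K1 := Series (fun e => rho1 ^ e * phi 1 e)).
  assert (HK1s : is_series (fun e => rho1 ^ e * phi 1 e) (/ (1 - rho1 * 1) * / (1 - rho1 / 1)))
    by (apply is_series_phi; lra).
  assert (HK1 : K1 = / (1 - rho1 * 1) * / (1 - rho1 / 1)) by (apply is_series_unique; exact HK1s).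
  assert (HK1p : 0 < K1).
  { rewrite HK1. apply Rmult_lt_0_compat; apply Rinv_0_lt_compat; lra. }
  assert (HexK : ex_series (fun e => rho1 ^ e * phi 1 e)) by (eexists; exact HK1s).
  assert (HFN : forall M h, F sigma rho1 M h / ((U sigma M 0 + U sigma M 1) / (INR M + 2)) =
                 Series (fun e => rho1 ^ e * Wn sigma M h e)).
  { intros M h. rewrite <- (is_series_unique _ _ (F_series sigma rho1 M h)).
    pose proof (pos_INR M). specialize (Hd M).
    replace (Series (fun e => rho1 ^ e * W sigma M h e) / ((U sigma M 0 + U sigma M 1) / (INR M + 2)))
      with (Series (fun e => rho1 ^ e * W sigma M h e) * ((INR M + 2) / (U sigma M 0 + U sigma M 1)))
      by (field; lra).
    rewrite <- Series_scal_r. apply Series_ext. intros e. unfold Wn. unfold Rdiv. ring. }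
  assert (Hdom : forall M h e, Rabs (rho1 ^ e * Wn sigma M h e) <=
                   ((2 + sigma) * (INR h + 1)) * (rho1 ^ e * phi 1 e)).
  { intros M h e. pose proof (Wn_bnd sigma M h e Hs). pose proof (pow_le rho1 e ltac:(lra)).
    rewrite phi_1. rewrite Rabs_pos_eq by (apply Rmult_le_pos; lra).
    replace ((2 + sigma) * (INR h + 1) * (rho1 ^ e * (INR e + 1)))
      with (rho1 ^ e * ((2 + sigma) * ((INR h + 1) * (INR e + 1)))) by ring.
    apply Rmult_le_compat_l; lra. }
  exists (fun M => (U sigma M 0 + U sigma M 1) / (INR M + 2)), ((2 + sigma) / 2 * K1),
    (fun h => ((2 + sigma) * K1) * (rho0 ^ h * phi 1 h)).
  split.
  { intros M. apply Rdiv_lt_0_compat; [apply Hd | pose proof (pos_INR M); lra]. }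
  split; [apply Rmult_lt_0_compat; lra|].
  split.
  { rewrite Rinv_1. replace (1 + 1 + sigma) with ((2 + sigma) * 1) by ring.
    apply is_lim_seq_ext with
      (fun M => (U sigma (S M) 0 + U sigma (S M) 1) / (U sigma M 0 + U sigma M 1) * ((INR M + 2) / (INR M + 3))).
    - intros M. rewrite S_INR. pose proof (pos_INR M). pose proof (Hd (S M)). specialize (Hd M).
      field. repeat split; lra.
    - apply is_lim_seq_mult'; [apply ratio_U; exact Hs | apply lim_ratio_lin]. }
  split.
  { intros h. apply is_lim_seq_ext with (fun M => Series (fun e => rho1 ^ e * Wn sigma M h e)).
    - intros M. symmetry. apply HFN.
    - replace ((2 + sigma) / 2 * K1 * phi 1 h) with
        (Series (fun e => rho1 ^ e * ((2 + sigma) / 2 * ((INR h + 1) * (INR e + 1))))).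
      + apply (dct (fun M e => rho1 ^ e * Wn sigma M h e) _ (fun e => ((2 + sigma) * (INR h + 1)) * (rho1 ^ e * phi 1 e))).
        * intros e. apply lim_scal, Wn_lim. exact Hs.
        * intros M e. apply Hdom.
        * apply exs_scal, HexK.
      + unfold K1. rewrite phi_1.
        replace ((2 + sigma) / 2 * Series (fun e => rho1 ^ e * phi 1 e) * (INR h + 1))
          with (((2 + sigma) / 2 * (INR h + 1)) * Series (fun e => rho1 ^ e * phi 1 e)) by ring.
        rewrite <- Series_scal_l. apply Series_ext. intros e. rewrite phi_1. ring. }
  split.
  { intros M h. rewrite HFN. pose proof (pow_le rho0 h ltac:(lra)).
    assert (Hb : 0 <= Series (fun e => rho1 ^ e * Wn sigma M h e) <= ((2 + sigma) * (INR h + 1)) * K1).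
    { split.
      - assert (Z0 : Series (fun _ : nat => 0) = 0) by (apply is_series_unique; apply (is_series_fin (fun _ => 0) 0); reflexivity).
        rewrite <- Z0. apply Series_le.
        + intros e. pose proof (Wn_bnd sigma M h e Hs). pose proof (pow_le rho1 e ltac:(lra)).
          split; [lra|]. apply Rmult_le_pos; lra.
        + apply (exs_dom _ _ (Hdom M h)). apply exs_scal, HexK.
      - unfold K1. rewrite <- Series_scal_l. apply Series_le.
        + intros e. pose proof (Wn_bnd sigma M h e Hs). pose proof (pow_le rho1 e ltac:(lra)).
          split; [apply Rmult_le_pos; lra|]. pose proof (Hdom M h e).
          rewrite Rabs_pos_eq in H4 by (apply Rmult_le_pos; lra). exact H4.
        + apply exs_scal, HexK. }
    rewrite Rabs_pos_eq by (apply Rmult_le_pos; lra).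
    rewrite phi_1. 
    replace ((2 + sigma) * K1 * (rho0 ^ h * (INR h + 1))) with (rho0 ^ h * ((2 + sigma) * (INR h + 1) * K1)) by ring.
    apply Rmult_le_compat_l; lra. }
  apply exs_scal. exists (/ (1 - rho0 * 1) * / (1 - rho0 / 1)). apply is_series_phi; lra.
Qed.

Lemma chain_prod_ext (Q1 Q2 : nat -> nat -> R) n K :
  (forall a b, Q1 a b = Q2 a b) -> chain_prod Q1 n K = chain_prod Q2 n K.
Proof. intros H. induction K; simpl; [reflexivity|]. rewrite IHK, H. reflexivity. Qed.

Theorem corollary1p3 (sigma rho0 rho1 : R)
  (Hsigma : 0 < sigma) (H0a : 0 < rho0) (H0b : rho0 < 1) (H1 : 0 < rho1)
  (H01 : rho0 * rho1 < 1) :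
  forall (K : nat) (n : nat -> nat),
    is_lim_seq (fun L => PrL sigma rho0 rho1 L K n)
      (Zfdd sigma rho0 (Rmax 1 rho1) K n).
Proof.
  intros K n.
  set (rho := Rmax 1 rho1).
  assert (Hrho : (rho = 1 \/ 1 < rho) /\ rho0 * rho < 1 /\
    exists (N : nat -> R) (kap : R) (D : nat -> R),
    (forall M, 0 < N M) /\ 0 < kap /\
    is_lim_seq (fun M => N (S M) / N M) (rho + / rho + sigma) /\
    (forall h, is_lim_seq (fun M => F sigma rho1 M h / N M) (kap * phi rho h)) /\
    (forall M h, Rabs (rho0 ^ h * (F sigma rho1 M h / N M)) <= D h) /\ ex_series D).
  { destruct (Rlt_le_dec 1 rho1) as [Hgt|Hle].
    - assert (E : rho = rho1) by (unfold rho; apply Rmax_right; lra). rewrite E.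
      split; [right; exact Hgt|]. split; [exact H01|]. apply case_gt; assumption.
    - assert (E : rho = 1) by (unfold rho; apply Rmax_left; lra). rewrite E.
      split; [left; reflexivity|]. split; [lra|].
      destruct (Req_dec rho1 1) as [Heq|Hne].
      + subst rho1. apply case_eq; assumption.
      + apply case_lt; try assumption. lra. }
  destruct Hrho as [Hr [Hr0 [N [kap [D [HN [Hkap [Hrat [HF [HD HDs]]]]]]]]]].
  assert (Hrp : 0 < rho) by lra.
  assert (Hq : rho0 / rho < 1).
  { apply div_lt1; [lra|]. destruct Hr as [Hr|Hr]; [rewrite Hr|]; nra. }
  assert (Hq0 : 0 < rho0 / rho) by (apply Rdiv_lt_0_compat; lra).
  set (lam := rho + / rho + sigma).
  assert (Hlam : 0 < lam) by (unfold lam; pose proof (Rinv_0_lt_compat rho Hrp); lra).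
  set (SS := Series (fun h => rho0 ^ h * phi rho h)).
  assert (HSS : SS = / (1 - rho0 * rho) * / (1 - rho0 / rho))
    by (apply is_series_unique, is_series_phi; lra).
  assert (HSSp : 0 < SS) by (rewrite HSS; apply Rmult_lt_0_compat; apply Rinv_0_lt_compat; lra).
  set (T := chain_prod (tk sigma) n K).
  assert (Hphi : forall k, 0 < phi rho k) by (intros; apply phi_pos; lra).
  replace (Zfdd sigma rho0 rho K n) with (rho0 ^ (n 0%nat) * T * (phi rho (n K) / (lam ^ K * SS))).
  - apply is_lim_seq_ext_loc with
      (fun L => rho0 ^ (n 0%nat) * T * (F sigma rho1 (L - K)%nat (n K) / Series (fun h => rho0 ^ h * F sigma rho1 L h))).
    + exists K. intros L HL. unfold PrL. rewrite numer_eq by exact HL.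
      rewrite (Series_ext (Wh sigma rho0 rho1 L (fun _ _ => true)) (fun h => rho0 ^ h * F sigma rho1 L h)) by (intros; apply Wh_true).
      unfold T, Rdiv. ring.
    + apply lim_scal. apply (assemble (F sigma rho1) N rho0 lam kap (phi rho) D); auto.
  - unfold Zfdd. rewrite Z0law_eq by lra.
    rewrite (chain_prod_ext _ (fun a b => tk sigma a b * phi rho b / (lam * phi rho a)))
      by (intros; apply Qker_eq; assumption).
    rewrite chain_tele; [| intros k; specialize (Hphi k); lra | lra].
    fold T. rewrite HSS. pose proof (Hphi (n 0%nat)). pose proof (Hphi (n K)).
    field. repeat split; try lra. apply pow_nonzero. lra.
Qed.
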